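(* Let $T$ be the BFS tree produced by temporal BFS on a temporal graph $G=(V,E)$ from source $s$ with starting time $t_s$, and let $v\neq s$. If $v$ occurs in $T$, let $v_o$ be its occurrence of smallest level; then the sequence of tree edges on the path from the root to $v_o$ is a shortest temporal path from $s$ to $v$, i.e. a temporal path from $s$ to $v$ starting at or after $t_s$ whose number of hops is minimal among all temporal paths from $s$ to $v$ starting at or after $t_s$. If $v$ does not occur in $T$, then there is no temporal path from $s$ to $v$ starting at or after $t_s$.
   Context: A temporal graph is a pair $G=(V,E)$ where $V$ is a finite set of vertices and $E$ is a finite set of temporal edges, i.e. triples $(u,v,t)$ with $u,v\in V$, $u\neq v$, $t\in\mathbb{R}$ (the time at which the edge is active); distinct elements of $E$ are distinct triples. Fix $t_s\in\mathbb{R}$ and $s\in V$. A temporal path from $x$ to $y$ (starting at or after $t_s$) is a sequence $P=\langle (w_1,w_2,t_1),\dots,(w_k,w_{k+1},t_k)\rangle$ of $k\ge1$ edges of $E$ with $w_1=x$, $w_{k+1}=y$ and $t_s\le t_1\le t_2\le\dots\le t_k$; its number of hops is $k$. Temporal BFS. Records are tuples $(x,d,\tau,p)$ (vertex $x$, level $d$, time $\tau$, predecessor record $p$ or none); every record ever created is an occurrence (node) of the BFS tree $T$, rooted at the initial record, with a tree edge from the predecessor record to the record; the level and time of an occurrence are the final values of its fields. For each $x\in V$ a current value $\sigma(x)$ is kept, initially $\infty$, and set to $\tau$ whenever a record of $x$ is created or its time is updated to $\tau$. Initially the FIFO queue $Q$ contains only $(s,0,t_s,\text{none})$ and $\sigma(s)=t_s$;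 no edge is traversed. While $Q\neq\emptyset$: pop the front record $R=(u,d_u,\sigma_u,p_u)$; let $B$ be the set of edges $(u,v,t)\in E$ not yet traversed with $\sigma_u\le t$; for each vertex $v$ such that $B$ contains an edge to $v$ (in any order), let $e=(u,v,t)$ be the edge of $B$ to $v$ with smallest $t$, mark $e$ traversed, and: (i) if $Q$ contains no record of $v$ and $\sigma(v)>t$, create $(v,d_u+1,t,R)$ and append it to $Q$; (ii) if $Q$ contains a record of $v$ with level $d_u+1$ and $\sigma(v)>t$, set that record's time to $t$ and predecessor to $R$; (iii) if $Q$ contains a record of $v$ but none with level $d_u+1$, and $\sigma(v)>t$, create $(v,d_u+1,t,R)$ and append it to $Q$. When a record's predecessor is $R$, the tree edge into it corresponds to the last edge $e=(u,v,t)$ that created or updated it. *)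

(* Defs.v *)
From Stdlib Require Import Reals List.
Import ListNotations.
Open Scope R_scope.
Set Implicit Arguments.

Definition edge (V : Type) := (V * V * R)%type.
Definition esrc {V : Type} (e : edge V) : V := fst (fst e).
Definition etgt {V : Type} (e : edge V) : V := snd (fst e).
Definition etime {V : Type} (e : edge V) : R := snd e.

Fixpoint is_tpath {V : Type} (E : list (edge V)) (x y : V) (tmin : R)
    (P : list (edge V)) : Prop :=
  match P with
  | [] => False
  | e :: P' =>
      esrc e = x /\ In e E /\ tmin <= etime e /\
      match P' with
      | [] => etgt e = y
      | _ => is_tpath E (etgt e) y (etime e) P'
      end
  end.

Definition shortest_tpath {V : Type} (E : list (edge V)) (x y : V) (ts : R)
    (P : list (edge V)) : Prop :=
  is_tpath E x y ts P /\
  forall P', is_tpath E x y ts P' -> (length P <= length P')%nat.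

(** BFS records (x, d, tau, p), identified by their index in the record store;
    [re] is the last edge that created/updated the record (the tree edge into it). *)
Record brec (V : Type) := mkRec {
  rv : V; rd : nat; rt : R; rp : option nat; re : option (edge V) }.

Record bstate (V : Type) := mkState {
  recs : list (brec V);      (* all records ever created = nodes of T *)
  queue : list nat;          (* FIFO queue of record indices *)
  sigma : V -> option R;     (* None = infinity *)
  trav : list (edge V) }.

Definition sigma_gt (o : option R) (t : R) : Prop :=
  match o with None => True | Some x => t < x end.

Definition sigma_upd {V : Type} (s : V -> option R) (v : V) (t : R)
    (s' : V -> option R) : Prop :=
  s' v = Some t /\ forall x, x <> v -> s' x = s x.

Fixpoint upd_nth {A : Type} (l : list A) (i : nat) (x : A) : list A :=
  match l, i with
  | [], _ => []
  | _ :: l', O => x :: l'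
  | y :: l', S i' => y :: upd_nth l' i' x
  end.

Definition queue_has {V : Type} (st : bstate V) (v : V) (P : nat -> Prop) : Prop :=
  exists i r, In i (queue st) /\ nth_error (recs st) i = Some r /\
              rv r = v /\ P (rd r).

(** Handling of the chosen edge e = (u,v,t) while processing popped record
    number [ridx] of level [du]. *)
Inductive handle {V : Type} (ridx du : nat) (e : edge V) :
    bstate V -> bstate V -> Prop :=
| H_new (st : bstate V) s' :
    ~ queue_has st (etgt e) (fun _ => True) ->
    sigma_gt (sigma st (etgt e)) (etime e) ->
    sigma_upd (sigma st) (etgt e) (etime e) s' ->
    handle ridx du e st
      (mkState (recs st ++ [mkRec (etgt e) (S du) (etime e) (Some ridx) (Some e)])
               (queue st ++ [length (recs st)]) s' (e :: trav st))
| H_update (st : bstate V) s' i r :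
    In i (queue st) -> nth_error (recs st) i = Some r ->
    rv r = etgt e -> rd r = S du ->
    sigma_gt (sigma st (etgt e)) (etime e) ->
    sigma_upd (sigma st) (etgt e) (etime e) s' ->
    handle ridx du e st
      (mkState (upd_nth (recs st) i (mkRec (etgt e) (rd r) (etime e) (Some ridx) (Some e)))
               (queue st) s' (e :: trav st))
| H_again (st : bstate V) s' :
    queue_has st (etgt e) (fun _ => True) ->
    ~ queue_has st (etgt e) (fun d => d = S du) ->
    sigma_gt (sigma st (etgt e)) (etime e) ->
    sigma_upd (sigma st) (etgt e) (etime e) s' ->
    handle ridx du e st
      (mkState (recs st ++ [mkRec (etgt e) (S du) (etime e) (Some ridx) (Some e)])
               (queue st ++ [length (recs st)]) s' (e :: trav st))
| H_skip (st : bstate V) :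
    ~ sigma_gt (sigma st (etgt e)) (etime e) ->
    handle ridx du e st (mkState (recs st) (queue st) (sigma st) (e :: trav st)).

Inductive process {V : Type} (ridx du : nat) (B : list (edge V)) :
    bstate V -> list V -> bstate V -> Prop :=
| P_nil st : process ridx du B st [] st
| P_cons st v vs e st1 st2 :
    In e B -> etgt e = v ->
    (forall e', In e' B -> etgt e' = v -> etime e <= etime e') ->
    handle ridx du e st st1 ->
    process ridx du B st1 vs st2 ->
    process ridx du B st (v :: vs) st2.

Inductive bfs_step {V : Type} (E : list (edge V)) : bstate V -> bstate V -> Prop :=
| Step st r q R B vs st' :
    queue st = r :: q ->
    nth_error (recs st) r = Some R ->
    (forall e, In e B <->
       (In e E /\ ~ In e (trav st) /\ esrc e = rv R /\ rt R <= etime e)) ->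
    NoDup vs ->
    (forall v, In v vs <-> exists e, In e B /\ etgt e = v) ->
    process r (rd R) B (mkState (recs st) q (sigma st) (trav st)) vs st' ->
    bfs_step E st st'.

Inductive bfs_reach {V : Type} (E : list (edge V)) : bstate V -> bstate V -> Prop :=
| R_refl st : bfs_reach E st st
| R_step st st1 st2 : bfs_step E st st1 -> bfs_reach E st1 st2 -> bfs_reach E st st2.

Definition bfs_init {V : Type} (s : V) (ts : R) (st : bstate V) : Prop :=
  recs st = [mkRec s O ts None None] /\ queue st = [O] /\
  sigma st s = Some ts /\ (forall x, x <> s -> sigma st x = None) /\
  trav st = [].

Inductive tree_path {V : Type} (rs : list (brec V)) : nat -> list (edge V) -> Prop :=
| TP_root : tree_path rs O []
| TP_step i r j e P :
    nth_error rs i = Some r -> rp r = Some j -> re r = Some e ->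
    tree_path rs j P -> tree_path rs i (P ++ [e]).

(* Main.v *)
Require Import Defs.
From Stdlib Require Import Reals List Lia Lra Classical Wf_nat.
Import ListNotations.
Open Scope R_scope.

Lemma nth_upd_nth {A} (l : list A) i x j :
  nth_error (upd_nth l i x) j =
  if Nat.eq_dec i j then (if Nat.ltb i (length l) then Some x else None) else nth_error l j.
Proof.
  revert i j; induction l as [|y l IH]; intros i j; simpl.
  - destruct (Nat.eq_dec i j); [destruct i|]; destruct j; reflexivity.
  - destruct i as [|i]; destruct j as [|j]; simpl; try reflexivity.
    + rewrite IH. destruct (Nat.eq_dec i j), (Nat.eq_dec (S i) (S j)); try lia; reflexivity.
Qed.

Lemma length_upd_nth {A} (l : list A) i x : length (upd_nth l i x) = length l.
Proof. revert i; induction l; intros [|i]; simpl; auto. Qed.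

Definition G' {V} (st : bstate V) (d : nat) (v : V) (t : R) : Prop :=
  exists j rj, nth_error (recs st) j = Some rj /\ rv rj = v /\ (rd rj <= d)%nat /\ rt rj <= t.

Definition Mono {V} (st st' : bstate V) : Prop :=
  forall j r, nth_error (recs st) j = Some r -> exists r', nth_error (recs st') j = Some r' /\
    rv r' = rv r /\ rd r' = rd r /\ rt r' <= rt r.

Definition Stable {V} (k : nat) (st st' : bstate V) : Prop :=
  forall j, (j < k)%nat -> nth_error (recs st') j = nth_error (recs st) j.

Lemma Mono_refl {V} (st : bstate V) : Mono st st.
Proof. intros j r H; exists r; repeat split; auto; lra. Qed.

Lemma Mono_trans {V} (a b c : bstate V) : Mono a b -> Mono b c -> Mono a c.
Proof.
  intros H1 H2 j r H. destruct (H1 _ _ H) as (r1 & E1 & A1 & B1 & C1).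
  destruct (H2 _ _ E1) as (r2 & E2 & A2 & B2 & C2).
  exists r2; repeat split; try congruence; lra.
Qed.

Lemma G'_mono {V} (st st' : bstate V) d v t : Mono st st' -> G' st d v t -> G' st' d v t.
Proof.
  intros HM (j & rj & E1 & A & B & C). destruct (HM _ _ E1) as (r' & E2 & A2 & B2 & C2).
  exists j, r'; repeat split; auto; try congruence; try lia; lra.
Qed.

Lemma G'_weak {V} (st : bstate V) d d' v t t' : (d <= d')%nat -> t <= t' -> G' st d v t -> G' st d' v t'.
Proof. intros Hd Ht (j & rj & E1 & A & B & C). exists j, rj; repeat split; auto; try lia; lra. Qed.

Definition root {V} (s : V) (ts : R) : brec V := mkRec s O ts None None.

Definition Core {V} (E : list (edge V)) (s : V) (ts : R) (k : nat) (st : bstate V) : Prop :=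
  queue st = seq k (length (recs st) - k) /\ (k <= length (recs st))%nat /\
  nth_error (recs st) 0 = Some (root s ts) /\
  (forall i r, nth_error (recs st) i = Some r -> (i = O /\ r = root s ts) \/
     exists j rj e, (j < i)%nat /\ (j < k)%nat /\ rp r = Some j /\ re r = Some e /\
       nth_error (recs st) j = Some rj /\ In e E /\ esrc e = rv rj /\ etgt e = rv r /\
       etime e = rt r /\ rt rj <= etime e /\ rd r = S (rd rj)) /\
  (forall i j ri rj, (i <= j)%nat -> nth_error (recs st) i = Some ri ->
       nth_error (recs st) j = Some rj -> (rd ri <= rd rj)%nat) /\
  (forall i r, nth_error (recs st) i = Some r -> exists tau, Defs.sigma st (rv r) = Some tau /\ tau <= rt r) /\
  (forall v tau, Defs.sigma st v = Some tau -> exists i r, nth_error (recs st) i = Some r /\ rv r = v /\ rt r = tau) /\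
  (forall e, In e (trav st) -> exists j rj, (j < k)%nat /\ nth_error (recs st) j = Some rj /\
       G' st (S (rd rj)) (etgt e) (etime e)).

Lemma nth_snoc_inv {A} (l:list A) x j r : nth_error (l ++ [x]) j = Some r ->
  nth_error l j = Some r \/ (j = length l /\ r = x).
Proof.
  intro H. destruct (Nat.lt_ge_cases j (length l)) as [Hl|Hl].
  - left. rewrite nth_error_app1 in H; auto.
  - right. rewrite nth_error_app2 in H by lia.
    destruct (j - length l)%nat eqn:Hj; simpl in H.
    + split; [lia|congruence].
    + destruct n; discriminate.
Qed.

Lemma nth_snoc_old {A} (l:list A) x j r : nth_error l j = Some r -> nth_error (l ++ [x]) j = Some r.
Proof.
  intro H. rewrite nth_error_app1; auto. apply nth_error_Some; congruence.
Qed.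

Lemma nth_snoc_new {A} (l:list A) x : nth_error (l ++ [x]) (length l) = Some x.
Proof. rewrite nth_error_app2 by lia. rewrite Nat.sub_diag; reflexivity. Qed.

Lemma nth_upd {A} (l : list A) i x j : (i < length l)%nat ->
  nth_error (upd_nth l i x) j = if Nat.eq_dec i j then Some x else nth_error l j.
Proof.
  intro Hi. rewrite nth_upd_nth. destruct (Nat.eq_dec i j); auto.
  destruct (Nat.ltb_spec i (length l)); auto; lia.
Qed.

Lemma nth_lt {A} (l : list A) j r : nth_error l j = Some r -> (j < length l)%nat.
Proof. intro H. apply nth_error_Some; congruence. Qed.

Lemma sigma_upd_cases {V} (sg sg' : V -> option R) v t w :
  sigma_upd sg v t sg' -> (w = v /\ sg' w = Some t) \/ (w <> v /\ sg' w = sg w).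
Proof.
  intros [H1 H2]. destruct (classic (w = v)) as [->|Hn]; [left|right]; auto.
Qed.

Definition HPost {V} (E : list (edge V)) (s : V) (ts : R) k L e (st st1 : bstate V) :=
  Core E s ts (S k) st1 /\ (forall j rj, nth_error (recs st1) j = Some rj -> (rd rj <= S L)%nat) /\
  Mono st st1 /\ Stable (S k) st st1 /\ G' st1 (S L) (etgt e) (etime e).

Lemma append_inv {V} (E : list (edge V)) s ts k L R e (st : bstate V) s' :
  Core E s ts (S k) st ->
  nth_error (recs st) k = Some R -> rd R = L ->
  In e E -> esrc e = rv R -> rt R <= etime e ->
  (forall j rj, nth_error (recs st) j = Some rj -> (rd rj <= S L)%nat) ->
  sigma_gt (Defs.sigma st (etgt e)) (etime e) ->
  sigma_upd (Defs.sigma st) (etgt e) (etime e) s' ->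
  HPost E s ts k L e st
      (mkState (recs st ++ [mkRec (etgt e) (S L) (etime e) (Some k) (Some e)])
               (queue st ++ [length (recs st)]) s' (e :: trav st)).
Proof.
  intros (Hq & Hk & H0 & Htr & Hmr & Hs1 & Hs2 & Htv) HR HL He Hsrc Hle Hb Hgt Hup.
  set (nr := mkRec (etgt e) (S L) (etime e) (Some k) (Some e)).
  set (st1 := mkState (recs st ++ [nr]) (queue st ++ [length (recs st)]) s' (e :: trav st)).
  assert (HM : Mono st st1).
  { intros j r Hj. exists r. simpl. repeat split; auto using nth_snoc_old; lra. }
  assert (HG : G' st1 (S L) (etgt e) (etime e)).
  { exists (length (recs st)), nr. simpl. rewrite nth_snoc_new. repeat split; auto; lra. }
  assert (Hkl := nth_lt _ _ _ HR).
  unfold HPost. split; [|split; [|split; [|split]]]; auto.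
  - unfold Core. simpl. rewrite length_app. simpl.
    split; [|split; [|split; [|split; [|split; [|split; [|split]]]]]].
    + rewrite Hq. replace (length (recs st) + 1 - S k)%nat with (S (length (recs st) - S k)) by lia.
      rewrite seq_S. f_equal. f_equal. lia.
    + lia.
    + change (nth_error (recs st ++ [nr]) 0 = Some (root s ts)); apply nth_snoc_old; exact H0.
    + intros i r Hi. apply nth_snoc_inv in Hi as [Hi|[-> ->]].
      * destruct (Htr _ _ Hi) as [?|(j & rj & e' & A1 & A2 & A3 & A4 & A5 & A6)]; [left; auto|right].
        exists j, rj, e'. repeat split; auto using nth_snoc_old; tauto.
      * right. exists k, R, e. simpl. repeat split; auto; try lia; try congruence. apply nth_snoc_old; exact HR.
    + intros i j ri rj Hij Hi Hj.
      apply nth_snoc_inv in Hi as [Hi|[-> ->]]; apply nth_snoc_inv in Hj as [Hj|[-> ->]].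
      * eauto.
      * simpl. eauto.
      * apply nth_lt in Hj. lia.
      * lia.
    + intros i r Hi. destruct (sigma_upd_cases _ _ _ _ (rv r) Hup) as [[Hw Hs]|[Hw Hs]]; rewrite Hs.
      * exists (etime e). split; auto.
        apply nth_snoc_inv in Hi as [Hi|[-> ->]]; [|simpl; lra].
        destruct (Hs1 _ _ Hi) as (tau & Ht1 & Ht2). rewrite Hw in Ht1. rewrite Ht1 in Hgt. simpl in Hgt. lra.
      * apply nth_snoc_inv in Hi as [Hi|[-> ->]]; [|simpl in Hw; congruence]. exact (Hs1 _ _ Hi).
    + intros w tau Hw. destruct (sigma_upd_cases _ _ _ _ w Hup) as [[-> Hs]|[Hn Hs]]; rewrite Hs in Hw.
      * injection Hw as <-. exists (length (recs st)), nr. rewrite nth_snoc_new. auto.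
      * destruct (Hs2 _ _ Hw) as (i & r & A & B & C). exists i, r. auto using nth_snoc_old.
    + intros e' [<-|He'].
      * exists k, R. repeat split; auto using nth_snoc_old. rewrite HL. exact HG.
      * destruct (Htv _ He') as (j & rj & A & B & C). exists j, rj.
        repeat split; auto using nth_snoc_old. eapply G'_mono; eauto.
  - intros j rj Hj. simpl in Hj. apply nth_snoc_inv in Hj as [Hj|[-> ->]]; eauto.
  - intros j Hj. simpl. apply nth_error_app1. lia.
Qed.

Lemma update_inv {V} (E : list (edge V)) s ts k L R e (st : bstate V) s' i r :
  Core E s ts (S k) st ->
  nth_error (recs st) k = Some R -> rd R = L ->
  In e E -> esrc e = rv R -> rt R <= etime e ->
  (forall j rj, nth_error (recs st) j = Some rj -> (rd rj <= S L)%nat) ->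
  In i (queue st) -> nth_error (recs st) i = Some r ->
  rv r = etgt e -> rd r = S L ->
  sigma_gt (Defs.sigma st (etgt e)) (etime e) ->
  sigma_upd (Defs.sigma st) (etgt e) (etime e) s' ->
  HPost E s ts k L e st
      (mkState (upd_nth (recs st) i (mkRec (etgt e) (rd r) (etime e) (Some k) (Some e)))
               (queue st) s' (e :: trav st)).
Proof.
  intros (Hq & Hk & H0 & Htr & Hmr & Hs1 & Hs2 & Htv) HR HL He Hsrc Hle Hb Hiq Hi Hrv Hrd Hgt Hup.
  set (nr := mkRec (etgt e) (rd r) (etime e) (Some k) (Some e)).
  set (st1 := mkState (upd_nth (recs st) i nr) (queue st) s' (e :: trav st)).
  assert (Hil := nth_lt _ _ _ Hi).
  assert (Hki : (S k <= i)%nat).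
  { rewrite Hq in Hiq. apply in_seq in Hiq. lia. }
  assert (Hn : forall j, nth_error (recs st1) j = if Nat.eq_dec i j then Some nr else nth_error (recs st) j).
  { intro j. simpl. apply nth_upd; auto. }
  assert (Hold : forall j, j <> i -> nth_error (recs st1) j = nth_error (recs st) j).
  { intros j Hj. rewrite Hn. destruct (Nat.eq_dec i j); congruence. }
  assert (Hnew : nth_error (recs st1) i = Some nr).
  { rewrite Hn. destruct (Nat.eq_dec i i); congruence. }
  assert (Hinv : forall j rj, nth_error (recs st1) j = Some rj ->
     (j <> i /\ nth_error (recs st) j = Some rj) \/ (j = i /\ rj = nr)).
  { intros j rj Hj. rewrite Hn in Hj. destruct (Nat.eq_dec i j); [right|left]; split; congruence. }
  assert (Hsv : exists tau, Defs.sigma st (etgt e) = Some tau /\ etime e < tau /\ tau <= rt r).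
  { destruct (Hs1 _ _ Hi) as (tau & A & B). rewrite Hrv in A. rewrite A in Hgt. simpl in Hgt.
    exists tau; auto. }
  destruct Hsv as (tau0 & Htau0 & Htl & Htr0).
  assert (HM : Mono st st1).
  { intros j rj Hj. destruct (Nat.eq_dec j i) as [->|Hji].
    - rewrite Hi in Hj. injection Hj as <-. exists nr. split; auto. simpl. repeat split; auto; lra.
    - exists rj. rewrite Hold; auto. repeat split; auto; lra. }
  assert (HG : G' st1 (S L) (etgt e) (etime e)).
  { exists i, nr. rewrite Hnew. simpl. repeat split; auto; try lia; lra. }
  assert (Hlen : length (recs st1) = length (recs st)) by (simpl; apply length_upd_nth).
  unfold HPost. split; [|split; [|split; [|split]]]; auto.
  - unfold Core. rewrite Hlen.
    split; [|split; [|split; [|split; [|split; [|split; [|split]]]]]].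
    + exact Hq.
    + lia.
    + rewrite Hold by lia. exact H0.
    + intros m rm Hm. apply Hinv in Hm as [[Hmi Hm]|[-> ->]].
      * destruct (Htr _ _ Hm) as [?|(j & rj & e' & A1 & A2 & A3 & A4 & A5 & A6)]; [left; auto|right].
        exists j, rj, e'. rewrite Hold by lia. repeat split; auto; tauto.
      * right. exists k, R, e. rewrite Hold by lia. simpl. repeat split; auto; try lia; congruence.
    + intros a b ra rb Hab Ha Hb'.
      apply Hinv in Ha as [[_ Ha]|[-> ->]]; apply Hinv in Hb' as [[_ Hb']|[-> ->]]; simpl; eauto.
    + intros m rm Hm. destruct (sigma_upd_cases _ _ _ _ (rv rm) Hup) as [[Hw Hs]|[Hw Hs]]; simpl; rewrite Hs.
      * exists (etime e). split; auto.
        apply Hinv in Hm as [[_ Hm]|[-> ->]]; [|simpl; lra].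
        destruct (Hs1 _ _ Hm) as (tau & Ht1 & Ht2). rewrite Hw in Ht1. rewrite Ht1 in Hgt. simpl in Hgt. lra.
      * apply Hinv in Hm as [[_ Hm]|[-> ->]]; [|simpl in Hw; congruence]. exact (Hs1 _ _ Hm).
    + intros w tau Hw. simpl in Hw. destruct (sigma_upd_cases _ _ _ _ w Hup) as [[-> Hs]|[Hn' Hs]]; rewrite Hs in Hw.
      * injection Hw as <-. exists i, nr. rewrite Hnew. auto.
      * destruct (Hs2 _ _ Hw) as (m & rm & A & B & C). exists m, rm.
        rewrite Hold; auto. intros ->. rewrite Hi in A. injection A as <-. congruence.
    + intros e' [<-|He'].
      * exists k, R. rewrite Hold by lia. repeat split; auto. rewrite HL. exact HG.
      * destruct (Htv _ He') as (j & rj & A & B & C). exists j, rj.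
        rewrite Hold by lia. repeat split; auto. eapply G'_mono; eauto.
  - intros j rj Hj. apply Hinv in Hj as [[_ Hj]|[-> ->]]; eauto. simpl. lia.
  - intros j Hj. apply Hold. lia.
Qed.

Lemma skip_inv {V} (E : list (edge V)) s ts k L R e (st : bstate V) :
  Core E s ts (S k) st ->
  nth_error (recs st) k = Some R -> rd R = L ->
  (forall j rj, nth_error (recs st) j = Some rj -> (rd rj <= S L)%nat) ->
  ~ sigma_gt (Defs.sigma st (etgt e)) (etime e) ->
  HPost E s ts k L e st (mkState (recs st) (queue st) (Defs.sigma st) (e :: trav st)).
Proof.
  intros (Hq & Hk & H0 & Htr & Hmr & Hs1 & Hs2 & Htv) HR HL Hb Hng.
  set (st1 := mkState (recs st) (queue st) (Defs.sigma st) (e :: trav st)).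
  assert (HM : Mono st st1) by (intros j r H; exists r; simpl; repeat split; auto; lra).
  assert (HG : G' st1 (S L) (etgt e) (etime e)).
  { destruct (Defs.sigma st (etgt e)) as [x|] eqn:Hx; simpl in Hng; [|tauto].
    destruct (Hs2 _ _ Hx) as (m & rm & A & B & C). exists m, rm. simpl. repeat split; eauto. lra. }
  unfold HPost. split; [|split; [|split; [|split]]]; auto.
  - unfold Core. simpl. split; [|split; [|split; [|split; [|split; [|split; [|split]]]]]]; auto.
    intros e' [<-|He'].
    + exists k, R. repeat split; auto. rewrite HL. exact HG.
    + destruct (Htv _ He') as (j&rj&A&B&C); exists j, rj; repeat split; auto; eapply G'_mono; eauto.
  - intros j Hj. reflexivity.
Qed.

Lemma handle_inv {V} (E : list (edge V)) s ts k L R e (st st1 : bstate V) :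
  handle k L e st st1 ->
  Core E s ts (S k) st ->
  nth_error (recs st) k = Some R -> rd R = L ->
  In e E -> esrc e = rv R -> rt R <= etime e ->
  (forall j rj, nth_error (recs st) j = Some rj -> (rd rj <= S L)%nat) ->
  HPost E s ts k L e st st1.
Proof.
  intros Hh HC HR HL He Hsrc Hle Hb. destruct Hh.
  - eapply append_inv; eauto.
  - eapply update_inv; eauto.
  - eapply append_inv; eauto.
  - eapply skip_inv; eauto.
Qed.

Lemma process_inv {V} (E : list (edge V)) s ts k R B vs (st st' : bstate V) :
  process k (rd R) B st vs st' ->
  Core E s ts (S k) st -> nth_error (recs st) k = Some R ->
  (forall e, In e B -> In e E /\ esrc e = rv R /\ rt R <= etime e) ->
  (forall j rj, nth_error (recs st) j = Some rj -> (rd rj <= S (rd R))%nat) ->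
  Core E s ts (S k) st' /\ (forall j rj, nth_error (recs st') j = Some rj -> (rd rj <= S (rd R))%nat) /\
  Mono st st' /\ Stable (S k) st st' /\
  (forall v, In v vs -> forall e, In e B -> etgt e = v -> G' st' (S (rd R)) v (etime e)).
Proof.
  intros Hp. induction Hp as [st|st v vs e st1 st2 HeB Hev Hmin Hh Hp IH]; intros HC HR HB Hb.
  - split; [|split; [|split; [|split]]]; auto using Mono_refl.
    + intros j _; reflexivity.
    + intros v [].
  - destruct (HB _ HeB) as (He & Hs & Hl).
    destruct (handle_inv E s ts k (rd R) R e st st1 Hh HC HR eq_refl He Hs Hl Hb)
      as (HC1 & Hb1 & HM1 & HS1 & HG1).
    assert (HR1 : nth_error (recs st1) k = Some R) by (rewrite HS1; auto).
    destruct (IH HC1 HR1 HB Hb1) as (HC2 & Hb2 & HM2 & HS2 & Hcov).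
    split; [|split; [|split; [|split]]]; auto.
    + eapply Mono_trans; eauto.
    + intros j Hj. rewrite HS2, HS1; auto.
    + intros w [<-|Hw] e' He' Ht'.
      * eapply G'_mono; [exact HM2|]. eapply G'_weak; [apply le_n| |]; [|rewrite <- Hev; exact HG1].
        apply Hmin; auto.
      * eauto.
Qed.

Definition Full {V} (E : list (edge V)) s ts k (st : bstate V) : Prop :=
  Core E s ts k st /\
  ((k < length (recs st))%nat -> forall j rj rk, nth_error (recs st) j = Some rj ->
      nth_error (recs st) k = Some rk -> (rd rj <= S (rd rk))%nat) /\
  (forall i ri, (i < k)%nat -> nth_error (recs st) i = Some ri -> forall e, In e E ->
      esrc e = rv ri -> rt ri <= etime e -> G' st (S (rd ri)) (etgt e) (etime e)).

Lemma step_inv {V} (E : list (edge V)) s ts k (st st' : bstate V) :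
  bfs_step E st st' -> Full E s ts k st -> Full E s ts (S k) st'.
Proof.
  intros [st0 r q R0 B vs st1 Hq HR HBdef Hnd Hvs Hp] (HC & Hbd & Hdone).
  destruct HC as (Hq0 & Hk & H0 & Htr & Hmr & Hs1 & Hs2 & Htv).
  assert (Hkl : (k < length (recs st0))%nat).
  { destruct (length (recs st0) - k)%nat eqn:E1; [rewrite Hq0 in Hq; discriminate|lia]. }
  assert (Hrq : r = k /\ q = seq (S k) (length (recs st0) - S k)).
  { rewrite Hq0 in Hq. destruct (length (recs st0) - k)%nat eqn:E1; [lia|].
    simpl in Hq. injection Hq as <- <-. split; auto. f_equal. lia. }
  destruct Hrq as [-> ->].
  set (stp := mkState (recs st0) (seq (S k) (length (recs st0) - S k)) (Defs.sigma st0) (trav st0)).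
  assert (HCp : Core E s ts (S k) stp).
  { unfold Core; simpl. split; [reflexivity|]. split; [lia|]. split; [exact H0|].
    split; [|split; [exact Hmr|split; [exact Hs1|split; [exact Hs2|]]]].
    - intros i r Hi. destruct (Htr _ _ Hi) as [?|(j & rj & e & A1 & A2 & A)]; [left; auto|right].
      exists j, rj, e. split; [exact A1| split; [lia| exact A]].
    - intros e He. destruct (Htv _ He) as (j & rj & A & B1 & C). exists j, rj. repeat split; auto. }
  assert (HB : forall e, In e B -> In e E /\ esrc e = rv R0 /\ rt R0 <= etime e).
  { intros e He. apply HBdef in He. tauto. }
  assert (Hbp : forall j rj, nth_error (recs stp) j = Some rj -> (rd rj <= S (rd R0))%nat).
  { intros j rj Hj. simpl in Hj. eapply Hbd; eauto. }
  destruct (process_inv E s ts k R0 B vs stp st1 Hp HCp HR HB Hbp) as (HC1 & Hb1 & HM1 & HS1 & Hcov).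
  assert (HR1 : nth_error (recs st1) k = Some R0) by (rewrite HS1; auto).
  split; [|split]; auto.
  - intros Hlt j rj rk Hj Hk1. specialize (Hb1 _ _ Hj).
    destruct HC1 as (_ & _ & _ & _ & Hmr1 & _).
    specialize (Hmr1 k (S k) R0 rk (le_S _ _ (le_n _)) HR1 Hk1). lia.
  - intros i ri Hi Hri e He Hsrc Hle.
    destruct (Nat.eq_dec i k) as [->|Hik].
    + rewrite HR1 in Hri. injection Hri as <-.
      destruct (classic (In e (trav st0))) as [Ht|Ht].
      * destruct (Htv _ Ht) as (j & rj & A & B1 & C). eapply G'_mono; [exact HM1|].
        eapply G'_weak; [| apply Rle_refl | exact C]. apply le_n_S. apply (Hmr j k rj R0); [lia|exact B1|exact HR].
      * assert (HeB : In e B) by (apply HBdef; auto).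
        apply (Hcov (etgt e)); auto. apply Hvs. eauto.
    + assert (Hri0 : nth_error (recs st0) i = Some ri).
      { rewrite <- Hri. symmetry. apply HS1. lia. }
      eapply G'_mono; [exact HM1|]. eapply Hdone; eauto. lia.
Qed.

Lemma init_full {V} (E : list (edge V)) s ts (st : bstate V) : bfs_init s ts st -> Full E s ts 0 st.
Proof.
  intros (Hr & Hq & Hs & Hn & Ht).
  assert (Hnth : forall i r, nth_error (recs st) i = Some r -> i = O /\ r = root s ts).
  { intros i r H. rewrite Hr in H. destruct i as [|[|i]]; simpl in H; try discriminate.
    injection H as <-. auto. }
  split; [|split].
  - unfold Core. rewrite Hr. simpl. split; [exact Hq|]. split; [lia|]. split; [reflexivity|].
    split; [|split; [|split; [|split]]].
    + intros i r H. left. apply Hnth. rewrite Hr; exact H.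
    + intros i j ri rj _ Hi Hj. destruct (Hnth i ri) as [_ ->]; [rewrite Hr; auto|].
      destruct (Hnth j rj) as [_ ->]; [rewrite Hr; auto|]. lia.
    + intros i r H. destruct (Hnth i r) as [_ ->]; [rewrite Hr; auto|]. simpl. exists ts. split; auto; lra.
    + intros v tau H. destruct (classic (v = s)) as [->|Hvs].
      * rewrite Hs in H. injection H as <-. exists O, (root s ts). auto.
      * rewrite Hn in H by auto. discriminate.
    + intros e H. rewrite Ht in H. destruct H.
  - intros _ j rj rk Hj Hk. destruct (Hnth j rj Hj) as [_ ->]. simpl. lia.
  - intros i ri Hi. lia.
Qed.

Lemma reach_full {V} (E : list (edge V)) s ts (st stf : bstate V) :
  bfs_reach E st stf -> forall k, Full E s ts k st -> exists k', Full E s ts k' stf.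
Proof.
  intros H. induction H as [st|st st1 st2 Hs Hr IH]; intros k Hf; eauto.
  apply (IH (S k)). eapply step_inv; eauto.
Qed.

Lemma final_edge {V} (E : list (edge V)) s ts k (st : bstate V) :
  Full E s ts k st -> queue st = [] ->
  forall e, In e E -> forall i r, nth_error (recs st) i = Some r -> rv r = esrc e -> rt r <= etime e ->
  G' st (S (rd r)) (etgt e) (etime e).
Proof.
  intros (HC & _ & Hd) Hq e He i r Hi Hs Hl.
  destruct HC as (Hq0 & Hk & _).
  apply (Hd i); auto.
  assert (Hil := nth_lt _ _ _ Hi).
  rewrite Hq in Hq0. destruct (length (recs st) - k)%nat eqn:E1; [lia|discriminate].
Qed.

Lemma tpath_snoc {V} (E : list (edge V)) P : forall x y tmin P0 e0 e,
  is_tpath E x y tmin P -> P = P0 ++ [e0] -> etime e0 <= etime e -> In e E -> esrc e = y ->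
  is_tpath E x (etgt e) tmin (P ++ [e]).
Proof.
  induction P as [|a P IH]; intros x y tmin P0 e0 e H HP Ht He Hs; [destruct H|].
  destruct H as (A1 & A2 & A3 & A4). simpl. split; auto. split; auto. split; auto.
  destruct P as [|b P''].
  - destruct P0 as [|c P0]; simpl in HP; [|destruct P0; discriminate].
    injection HP as <-. simpl. repeat split; auto; congruence.
  - destruct P0 as [|c P0]; simpl in HP; [discriminate|]. injection HP as _ HP.
    change (is_tpath E (etgt a) (etgt e) (etime a) ((b :: P'') ++ [e])).
    eapply IH; eauto.
Qed.

Lemma tree_paths {V} (E : list (edge V)) s ts k (st : bstate V) :
  Core E s ts k st -> forall i r, nth_error (recs st) i = Some r ->
  exists P, tree_path (recs st) i P /\ length P = rd r /\
   ((P = [] /\ rv r = s /\ rt r = ts) \/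
    (is_tpath E s (rv r) ts P /\ exists P0 e0, P = P0 ++ [e0] /\ etime e0 = rt r)).
Proof.
  intros (_ & _ & _ & Htr & _). intro i. induction i as [i IH] using (well_founded_induction lt_wf).
  intros r Hi. destruct (Htr _ _ Hi) as [[-> ->]|(j & rj & e & A1 & A2 & A3 & A4 & A5 & A6 & A7 & A8 & A9 & A10 & A11)].
  - exists []. split; [constructor|]. simpl. split; auto.
  - destruct (IH j A1 rj A5) as (P & Hp & Hl & Hc).
    exists (P ++ [e]). split; [econstructor; eauto|]. split.
    + rewrite length_app, Hl, A11. simpl. lia.
    + right. split; [|exists P, e; split; auto].
      destruct Hc as [(-> & Hs & Ht)|(Hpt & P0 & e0 & HP & He0)].
      * simpl. repeat split; auto; [congruence|lra].
      * rewrite <- A8. eapply tpath_snoc; eauto. lra.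
Qed.

Lemma key_path {V} (E : list (edge V)) (st : bstate V)
  (Hedge : forall e, In e E -> forall i r, nth_error (recs st) i = Some r -> rv r = esrc e -> rt r <= etime e ->
     G' st (S (rd r)) (etgt e) (etime e)) :
  forall P x y tmin m, is_tpath E x y tmin P -> G' st m x tmin ->
  exists j rj, nth_error (recs st) j = Some rj /\ rv rj = y /\ (rd rj <= m + length P)%nat.
Proof.
  induction P as [|a P IH]; intros x y tmin m H HG; [destruct H|].
  destruct H as (A1 & A2 & A3 & A4). destruct HG as (j & rj & B1 & B2 & B3 & B4).
  assert (HG2 : G' st (S m) (etgt a) (etime a)).
  { eapply G'_weak; [| apply Rle_refl | apply (Hedge a A2 j rj B1)]; [lia|congruence|lra]. }
  destruct P as [|b P'].
  - destruct HG2 as (j2 & r2 & C1 & C2 & C3 & C4). exists j2, r2. simpl. repeat split; auto; [congruence|lia].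
  - destruct (IH _ _ _ _ A4 HG2) as (j2 & r2 & C1 & C2 & C3). exists j2, r2. simpl in *. repeat split; auto; lia.
Qed.

Theorem mainTheorem18 (V : Type) (E : list (edge V)) (s : V) (ts : R) :
  (exists lV : list V, forall x, In x lV) ->
  NoDup E ->
  (forall e, In e E -> esrc e <> etgt e) ->
  forall st0 stf : bstate V,
    bfs_init s ts st0 -> bfs_reach E st0 stf -> queue stf = [] ->
    forall v : V, v <> s ->
      (forall (i : nat) (r : brec V),
         nth_error (recs stf) i = Some r -> rv r = v ->
         (forall (j : nat) (r' : brec V),
            nth_error (recs stf) j = Some r' -> rv r' = v -> (rd r <= rd r')%nat) ->
         exists P, tree_path (recs stf) i P /\ shortest_tpath E s v ts P)
      /\
      ((~ exists (i : nat) (r : brec V), nth_error (recs stf) i = Some r /\ rv r = v) ->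
       forall P, ~ is_tpath E s v ts P).
Proof.
  intros _ _ _ st0 stf Hi Hr Hq v Hv.
  destruct (reach_full E s ts st0 stf Hr 0 (init_full E s ts st0 Hi)) as (k & Hf).
  pose proof (final_edge E s ts k stf Hf Hq) as Hedge.
  assert (HG0 : G' stf 0 s ts).
  { destruct Hf as ((_ & _ & H0 & _) & _). exists O, (root s ts). simpl. repeat split; auto; lra. }
  split.
  - intros i r Hir Hrv Hmin.
    destruct (tree_paths E s ts k stf (proj1 Hf) i r Hir) as (P & Htp & Hl & Hc).
    exists P. split; auto.
    destruct Hc as [(_ & Hs & _)|(Hpt & _)]; [congruence|].
    rewrite Hrv in Hpt. split; auto.
    intros P' HP'. destruct (key_path E stf Hedge P' s v ts 0 HP' HG0) as (j & rj & C1 & C2 & C3).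
    rewrite Hl. specialize (Hmin _ _ C1 C2). simpl in C3. lia.
  - intros Hno P HP. destruct (key_path E stf Hedge P s v ts 0 HP HG0) as (j & rj & C1 & C2 & C3).
    apply Hno. eauto.
Qed.
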